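(* Suppose that $G$ is a noncyclotomic nonbipartite graph containing a vertex $v$ such that the induced subgraph on $V(G)\setminus\{v\}$ is cyclotomic. Suppose also that $G$ is a line graph. Then $G$ is a Salem graph.
   Context: Graphs are finite simple graphs; eigenvalues are those of the adjacency matrix. A graph is cyclotomic if all its eigenvalues lie in $[-2,2]$. A line graph is a graph $L(H)$ whose vertices are the edges of some graph $H$, two being adjacent iff the edges share a vertex. A nonbipartite graph is a Salem graph if it has exactly one eigenvalue $\lambda>2$ and no eigenvalues in $(-\infty,-2)$. *)

(* Defs.v *)
From HB Require Import structures.
From mathcomp Require Import all_boot all_order all_algebra.
From mathcomp Require Import reals.
Set Implicit Arguments. Unset Strict Implicit. Unset Printing Implicit Defensive.
Import Order.TTheory GRing.Theory Num.Theory.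
Local Open Scope ring_scope.

Definition simple_graph (V : finType) (e : rel V) : Prop :=
  symmetric e /\ irreflexive e.

Definition adjmx (R : realType) (V : finType) (e : rel V) : 'M[R]_#|V| :=
  \matrix_(i, j) (e (enum_val i) (enum_val j))%:R.

Definition is_eigenvalue (R : realType) (V : finType) (e : rel V) (x : R) : bool :=
  root (char_poly (adjmx R e)) x.

Definition eig_mult (R : realType) (V : finType) (e : rel V) (x : R) : nat :=
  mup x (char_poly (adjmx R e)).

Definition cyclotomic (R : realType) (V : finType) (e : rel V) : Prop :=
  forall x : R, is_eigenvalue e x -> -2 <= x <= 2.

Definition bipartite (V : finType) (e : rel V) : Prop :=
  exists c : V -> bool, forall x y, e x y -> c x != c y.

Definition delete_vertex (V : finType) (e : rel V) (v : V) : rel {x : V | x != v} :=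
  fun x y => e (val x) (val y).

(* G is a line graph: there are a simple graph H on 'I_n and a bijection f
   from V onto the edge set of H (edges as 2-element vertex sets) such that
   distinct x, y are adjacent iff the edges f x, f y share a vertex. *)
Definition is_line_graph (V : finType) (e : rel V) : Prop :=
  exists (n : nat) (h : rel 'I_n) (f : V -> {set 'I_n}),
    simple_graph h /\ injective f /\
    (forall x, exists a b, h a b /\ f x = [set a; b]) /\
    (forall a b, h a b -> exists x, f x = [set a; b]) /\
    (forall x y, e x y = (x != y) && (f x :&: f y != set0)).

Definition salem_graph (R : realType) (V : finType) (e : rel V) : Prop :=
  ~ bipartite e /\
  (exists lam : R, 2 < lam /\ is_eigenvalue e lam /\ eig_mult e lam = 1%N /\
     forall mu : R, 2 < mu -> is_eigenvalue e mu -> mu = lam) /\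
  (forall mu : R, is_eigenvalue e mu -> -2 <= mu).
Arguments delete_vertex {V} e v.

(* Main.v *)
Require Import Defs.
From HB Require Import structures.
From mathcomp Require Import all_boot all_order all_algebra.
From mathcomp Require Import reals.
From mathcomp.real_closed Require Import complex.
Import Order.TTheory GRing.Theory Num.Theory.

Section Aux.
Set Implicit Arguments. Unset Strict Implicit. Unset Printing Implicit Defensive.

Lemma inter_card (V : finType) n (h : rel 'I_n) (f : V -> {set 'I_n}) :
  simple_graph h -> injective f -> (forall x, exists a b, h a b /\ f x = [set a; b]) ->
  forall y z, #|f y :&: f z| = (((y != z) && (f y :&: f z != set0)) + 2 * (y == z))%N.
Proof.
move=> [sh ih] fi hf.
have c2 : forall y, #|f y| = 2.
  move=> y; have [a [b [hab ->]]] := hf y; rewrite cards2.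
  by case: eqP hab => // ->; rewrite ih.
move=> y z; case: (eqVneq y z) => [<-|nyz]; first by rewrite setIid c2.
rewrite muln0 addn0 /=.
case: (eqVneq (f y :&: f z) set0) => [->|ne]; first by rewrite cards0.
apply/eqP; rewrite eqn_leq card_gt0 ne andbT leqNgt; apply/negP => big.
have sub : forall A B : {set 'I_n}, #|A| = 2 -> 1 < #|A :&: B| -> A :&: B = A.
  move=> A B cA cAB; have [le eqc] := subset_leqif_cards (subsetIl A B).
  apply/eqP; rewrite -eqc eqn_leq le cA //.
have e1 := sub _ _ (c2 y) big.
have e2 : f z :&: f y = f z by apply: sub (c2 z) _; rewrite setIC.
by move/negP: nyz; apply; apply/eqP/fi; rewrite -e1 -{2}e2 setIC.
Qed.



Local Open Scope ring_scope.

Lemma char_poly_similar (F : fieldType) n (P D : 'M[F]_n) :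
  P \in unitmx -> char_poly (invmx P *m D *m P) = char_poly D.
Proof.
move=> Pu; rewrite /char_poly /char_poly_mx.
set Q := map_mx (@polyC F) P; set Qi := map_mx (@polyC F) (invmx P).
have QiQ : Qi *m Q = 1%:M by rewrite -map_mxM mulVmx // map_mx1.
have -> : 'X%:M - map_mx (@polyC F) (invmx P *m D *m P)
   = Qi *m ('X%:M - map_mx (@polyC F) D) *m Q.
  rewrite !map_mxM mulmxBr mulmxBl -/Qi -/Q; congr (_ - _).
  by rewrite scalar_mxC -mulmxA QiQ mulmx1.
rewrite !det_mulmx mulrC mulrA -det_mulmx.
by rewrite (_ : Q *m Qi = 1%:M) ?det1 ?mul1r // -map_mxM mulmxV // map_mx1.
Qed.

Section Quad.
Variable C : numClosedFieldType.
Definition adjm' (m n : nat) (X : 'M[C]_(m, n)) : 'M[C]_(n, m) := map_mx Num.conj (trmx X).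

Lemma adjm'_mul m n p (A : 'M[C]_(m, n)) (B : 'M[C]_(n, p)) :
  adjm' (A *m B) = adjm' B *m adjm' A.
Proof. by rewrite /adjm' trmx_mul map_mxM. Qed.

Variables (n : nat) (MC P : 'M[C]_n) (d : 'rV[C]_n).
Hypothesis PP : P *m adjm' P = 1%:M.
Hypothesis PP' : adjm' P *m P = 1%:M.
Hypothesis dec : MC = adjm' P *m diag_mx d *m P.

Lemma quad_diag (g : 'rV[C]_n) :
  (g *m P *m MC *m adjm' (g *m P)) 0 0 = \sum_k d 0 k * (g 0 k * Num.conj (g 0 k)).
Proof.
rewrite adjm'_mul dec !mulmxA -(mulmxA g P) PP mulmx1 -(mulmxA _ P) PP mulmx1.
rewrite mul_mx_diag !mxE; apply: eq_bigr => k _.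
by rewrite !mxE mulrCA mulrA.
Qed.

Lemma norm_diag (g : 'rV[C]_n) :
  (g *m P *m adjm' (g *m P)) 0 0 = \sum_k (g 0 k * Num.conj (g 0 k)).
Proof.
rewrite adjm'_mul !mulmxA -(mulmxA g P) PP mulmx1 !mxE; apply: eq_bigr => k _.
by rewrite !mxE.
Qed.

Lemma quad_upper (b : C) : (forall k, d 0 k <= b) -> forall f : 'rV[C]_n,
  (f *m MC *m adjm' f) 0 0 <= b * (f *m adjm' f) 0 0.
Proof.
move=> hb f; have -> : f = (f *m adjm' P) *m P by rewrite -mulmxA PP' mulmx1.
rewrite quad_diag norm_diag mulr_sumr; apply: ler_sum => k _.
by apply: ler_wpM2r => //; apply: mul_conjC_ge0.
Qed.

Lemma quad_lower (b : C) (i j : 'I_n) (v : 'I_n) : i != j ->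
  b < d 0 i -> b < d 0 j ->
  exists f : 'rV[C]_n, f 0 v = 0 /\ b * (f *m adjm' f) 0 0 < (f *m MC *m adjm' f) 0 0.
Proof.
move=> nij bi bj.
suff H : forall a c : C, (a != 0) || (c != 0) -> a * P i v + c * P j v = 0 ->
  exists f : 'rV[C]_n, f 0 v = 0 /\ b * (f *m adjm' f) 0 0 < (f *m MC *m adjm' f) 0 0.
  have [Piv0|Piv0] := eqVneq (P i v) 0.
    by apply: (H 1 0); rewrite ?oner_eq0 // Piv0 mulr0 mul0r addr0.
  apply: (H (P j v) (- P i v)); first by rewrite oppr_eq0 Piv0 orbT.
  by rewrite mulrC mulNr addrN.
move=> a c nz hv.
set g : 'rV[C]_n := a *: delta_mx 0 i + c *: delta_mx 0 j.
have gk : forall k, g 0 k = a * (k == i)%:R + c * (k == j)%:R.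
  by move=> k; rewrite !mxE !eqxx /=.
have sum2 : forall F : 'I_n -> C, (forall k, k != i -> k != j -> F k = 0) ->
    \sum_k F k = F i + F j.
  move=> F F0; rewrite (bigD1 i) //= (bigD1 j) /=; last by rewrite eq_sym.
  by rewrite big1 ?addr0 // => k /andP [ki kj]; apply: F0.
have gi : g 0 i = a by rewrite gk eqxx (negPf nij) mulr0 mulr1 addr0.
have gj : g 0 j = c by rewrite gk eqxx eq_sym (negPf nij) mulr0 mulr1 add0r.
have g0 : forall k, k != i -> k != j -> g 0 k = 0.
  by move=> k ki kj; rewrite gk (negPf ki) (negPf kj) !mulr0 addr0.
exists (g *m P); split.
  rewrite mxE sum2 ?gi ?gj // => k ki kj; by rewrite g0 // mul0r.
rewrite quad_diag norm_diag !sum2 ?gi ?gj //; last first.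
  by move=> k ki kj; rewrite g0 // mul0r.
  by move=> k ki kj; rewrite g0 // mul0r mulr0.
have ha := mul_conjC_ge0 a; have hc := mul_conjC_ge0 c.
rewrite mulrDr.
case/orP: nz => nz.
  have ha' : 0 < a * a^* by rewrite lt_def ha andbT mulf_neq0 // conjC_eq0.
  apply: ltr_leD; first by rewrite ltr_pM2r.
  by rewrite ler_wpM2r // ltW.
have hc' : 0 < c * c^* by rewrite lt_def hc andbT mulf_neq0 // conjC_eq0.
apply: ler_ltD; first by rewrite ler_wpM2r // ltW.
by rewrite ltr_pM2r.
Qed.
End Quad.

Section Spec.
Variable R : realType.
Local Notation C := (R[i]).
Local Notation toC := (real_complex R).

Lemma conj_toC (r : R) : Num.conj (toC r) = toC r.
Proof. by apply: conj_Creal; apply/complex_realP; exists r. Qed.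

Lemma spec n (M : 'M[R]_n) : M^T = M -> exists (P : 'M[C]_n) (d : 'rV[C]_n),
  [/\ P *m adjm' P = 1%:M, adjm' P *m P = 1%:M,
      map_mx toC M = adjm' P *m diag_mx d *m P,
      (forall i, d 0 i \is Num.real) &
      char_poly (map_mx toC M) = \prod_(i < n) ('X - (d 0 i)%:P)].
Proof.
move=> symM; set MC := map_mx toC M.
have herm : MC \is hermsymmx.
  apply/is_hermitianmxP. rewrite expr0 scale1r /MC. apply/matrixP; move=> i j.
  by rewrite !mxE conj_toC -[in LHS]symM mxE.
have Pu := spectral_unitarymx MC.
exists (spectralmx MC), (spectral_diag MC).
have PP : spectralmx MC *m adjm' (spectralmx MC) = 1%:M by apply/unitarymxP.
have iP : invmx (spectralmx MC) = adjm' (spectralmx MC) by rewrite invmx_unitary.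
have PP' : adjm' (spectralmx MC) *m spectralmx MC = 1%:M.
  by rewrite -iP mulVmx // unitarymx_unit.
have dec : MC = adjm' (spectralmx MC) *m diag_mx (spectral_diag MC) *m spectralmx MC.
  by rewrite -iP; apply/orthomx_spectralP/hermitian_normalmx.
split => //.
- move=> i; have := hermitian_spectral_diag_real herm.
  by move/mxOverP => /(_ 0 i).
- rewrite {1}dec -iP char_poly_similar ?unitarymx_unit // char_poly_trig ?diag_mx_is_trig //.
  by apply: eq_bigr => i _; rewrite mxE eqxx mulr1n.
Qed.
End Spec.


Lemma mup_map (F K : fieldType) (f : {rmorphism F -> K}) (x : F) (p : {poly F}) :
  p != 0 -> mup (f x) (map_poly f p) = mup x p.
Proof.
move=> p0; have pf0 : map_poly f p != 0 by rewrite map_poly_eq0.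
have E : forall m, ('X - (f x)%:P) ^+ m = map_poly f (('X - x%:P) ^+ m).
  by move=> m; rewrite rmorphXn /= map_polyXsubC.
apply/eqP; rewrite eqn_leq; apply/andP; split.
  by rewrite mup_geq // -(dvdp_map f) -E -mup_geq.
by rewrite mup_geq // E dvdp_map -mup_geq.
Qed.

Lemma mup_prod (F : fieldType) n (d : 'I_n -> F) (x : F) :
  mup x (\prod_(k < n) ('X - (d k)%:P)) = (\sum_(k < n) (d k == x))%N.
Proof.
elim: n d => [|n IH] d; first by rewrite !big_ord0 mupNroot // root1.
rewrite !big_ord_recr /= mupM ?polyXsubC_eq0 //; last first.
  by rewrite prodf_seq_neq0; apply/allP => k _; rewrite polyXsubC_eq0.
rewrite IH; congr (_ + _)%N.
by have := mup_XsubCX 1 x (d ord_max); rewrite expr1 => ->; case: eqP.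
Qed.

Section Graph.
Variables (R : realType) (W : finType) (e : rel W).
Local Notation C := (R[i]).
Local Notation toC := (real_complex R).

Lemma adjmx_tr : symmetric e -> (adjmx R e)^T = adjmx R e.
Proof. by move=> se; apply/matrixP => i j; rewrite !mxE se. Qed.

Lemma sum_rank (F : 'I_#|W| -> C) : \sum_i F i = \sum_x F (enum_rank x).
Proof. by rewrite (reindex (@enum_rank W)) //; apply/onW_bij/enum_rank_bij. Qed.

Lemma quadE (f : 'rV[C]_#|W|) :
  (f *m map_mx toC (adjmx R e) *m adjm' f) 0 0 =
  \sum_x \sum_y f 0 (enum_rank x) * (e x y)%:R * Num.conj (f 0 (enum_rank y)).
Proof.
rewrite mxE sum_rank exchange_big /=; apply: eq_bigr => y _.
rewrite !mxE mulr_suml sum_rank; apply: eq_bigr => x _.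
by rewrite !mxE !enum_rankK rmorph_nat.
Qed.

Lemma normE (f : 'rV[C]_#|W|) :
  (f *m adjm' f) 0 0 = \sum_x f 0 (enum_rank x) * Num.conj (f 0 (enum_rank x)).
Proof. by rewrite mxE sum_rank; apply: eq_bigr => x _; rewrite !mxE. Qed.

Lemma root_d (d : 'rV[C]_#|W|) :
  (forall k, d 0 k \is Num.real) ->
  char_poly (map_mx toC (adjmx R e)) = \prod_(k < #|W|) ('X - (d 0 k)%:P) ->
  forall k, exists2 r : R, d 0 k = toC r & is_eigenvalue e r.
Proof.
move=> dr hc k; have /complex_realP [r dk] := dr k; exists r => //.
rewrite /is_eigenvalue -(fmorph_root toC) map_char_poly hc.
rewrite /root horner_prod; apply/prodf_eq0; exists k => //.
by rewrite !hornerE dk subrr.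
Qed.

Lemma eig_d (d : 'rV[C]_#|W|) :
  char_poly (map_mx toC (adjmx R e)) = \prod_(k < #|W|) ('X - (d 0 k)%:P) ->
  forall r, is_eigenvalue e r -> exists k, d 0 k = toC r.
Proof.
move=> hc r; rewrite /is_eigenvalue -(fmorph_root toC) map_char_poly hc.
rewrite /root horner_prod => /prodf_eq0 [k _]; rewrite !hornerE => /eqP /subr0_eq rd.
by exists k; rewrite rd.
Qed.

Lemma mult_d (d : 'rV[C]_#|W|) :
  char_poly (map_mx toC (adjmx R e)) = \prod_(k < #|W|) ('X - (d 0 k)%:P) ->
  forall r, eig_mult e r = (\sum_(k < #|W|) (d 0%R k == toC r))%N.
Proof.
move=> hc r; rewrite /eig_mult -(mup_map toC) ?map_char_poly ?hc ?mup_prod //.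
by rewrite -size_poly_eq0 size_char_poly.
Qed.
End Graph.

Section Del.
Variables (R : realType) (V : finType) (e : rel V) (v : V).
Local Notation C := (R[i]).
Local Notation toC := (real_complex R).
Local Notation V' := ({x : V | x != v} : finType).

Lemma sum_del (F : V -> C) : F v = 0 -> \sum_x F x = \sum_(y : V') F (val y).
Proof.
move=> Fv; rewrite (bigD1 v) //= Fv add0r.
rewrite (reindex_omap (val : V' -> V) insub); last first.
  by move=> i iv; rewrite insubT.
apply: eq_bigl=> -[i iA]/=; rewrite iA /=; apply/eqP; rewrite insubT; congr Some; exact: val_inj.
Qed.

Lemma restrict_del (f : 'rV[C]_#|V|) : f 0 (enum_rank v) = 0 ->
  let f' := (\row_k f 0 (enum_rank (val (enum_val k)))) : 'rV[C]_#|V'| in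
  (f' *m map_mx toC (adjmx R (delete_vertex e v)) *m adjm' f') 0 0 =
    (f *m map_mx toC (adjmx R e) *m adjm' f) 0 0 /\
  (f' *m adjm' f') 0 0 = (f *m adjm' f) 0 0.
Proof.
move=> fv f'; have f'E : forall y, f' 0 (enum_rank y) = f 0 (enum_rank (val y)).
  by move=> y; rewrite mxE enum_rankK.
split.
  rewrite !quadE (sum_del _ (F := fun x => \sum_y _)); last first.
    by rewrite big1 // => y _; rewrite fv !mul0r.
  apply: eq_bigr => x _; rewrite (sum_del _ (F := fun y => _)); last first.
    by rewrite fv conjC0 mulr0.
  by apply: eq_bigr => y _; rewrite !f'E.
rewrite !normE (sum_del _ (F := fun x => _)); last by rewrite fv mul0r.
by apply: eq_bigr => y _; rewrite f'E.
Qed.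
End Del.
Lemma sum_ind (R : realType) n (A B : {set 'I_n}) :
  \sum_a (((a \in A) : nat)%:R * ((a \in B) : nat)%:R : R) = (#|A :&: B|)%:R.
Proof.
rewrite -sum1_card natr_sum [RHS]big_mkcond /=; apply: eq_bigr => a _.
by rewrite inE; case: (a \in A); case: (a \in B); rewrite /= ?mulr0 ?mul0r ?mulr1.
Qed.

Lemma sum_rankR (R : realType) (W : finType) (F : 'I_#|W| -> R) :
  \sum_i F i = \sum_x F (enum_rank x).
Proof. by rewrite (reindex (@enum_rank W)) //; apply/onW_bij/enum_rank_bij. Qed.

Lemma line_lower (R : realType) (V : finType) (e : rel V) :
  is_line_graph e -> forall mu : R, is_eigenvalue e mu -> -2 <= mu.
Proof.
move=> [n [h [f [sh [fi [hf [_ ee]]]]]]] mu.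
rewrite /is_eigenvalue -eigenvalue_root_char => /eigenvalueP [x xA x0].
set X : V -> R := fun y => x 0 (enum_rank y).
have key1 : \sum_y \sum_z X y * (e y z)%:R * X z = mu * \sum_y X y ^+ 2.
  rewrite exchange_big mulr_sumr; apply: eq_bigr => z _.
  rewrite -mulr_suml expr2 mulrA; congr (_ * _).
  have := congr1 (fun M : 'rV[R]_#|V| => M 0 (enum_rank z)) xA; rewrite /= !mxE sum_rankR => <-.
  by apply: eq_bigr => y _; rewrite !mxE !enum_rankK.
have key2 : \sum_a (\sum_y (((a \in f y) : nat)%:R * X y))^+2 =
    \sum_y \sum_z X y * (e y z)%:R * X z + 2 * \sum_y X y ^+ 2.
  transitivity (\sum_a \sum_y \sum_z
      (((a \in f y) : nat)%:R * ((a \in f z) : nat)%:R * (X y * X z))).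
    apply: eq_bigr => a _; rewrite expr2 mulr_suml; apply: eq_bigr => y _.
    by rewrite mulr_sumr; apply: eq_bigr => z _; rewrite mulrACA.
  rewrite exchange_big /=.
  transitivity (\sum_y \sum_z \sum_a
      (((a \in f y) : nat)%:R * ((a \in f z) : nat)%:R * (X y * X z))).
    by apply: eq_bigr => y _; rewrite exchange_big.
  rewrite mulr_sumr -big_split; apply: eq_bigr => y _ /=.
  rewrite (bigD1 y) //= [X in _ = X + _](bigD1 y) //= addrAC; congr (_ + _).
    rewrite -mulr_suml sum_ind (inter_card sh fi hf) ee !eqxx /= mulr0 mul0r add0r.
    by rewrite expr2.
  apply: eq_bigr => z zy; rewrite -mulr_suml sum_ind (inter_card sh fi hf) ee.
  rewrite eq_sym zy /= (negPf zy) muln0 addn0.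
  by rewrite mulrCA mulrA.
have pos : 0 < \sum_y X y ^+ 2.
  rewrite lt_def sumr_ge0 ?andbT => [|y _]; last exact: sqr_ge0.
  apply/negP => /eqP s0; apply/negP: x0; rewrite negbK; apply/eqP/rowP => j.
  have := psumr_eq0P (fun y _ => sqr_ge0 (X y)) s0 (i := enum_val j) isT.
  by rewrite /X enum_valK mxE => /eqP; rewrite sqrf_eq0 => /eqP.
have : 0 <= (mu + 2) * \sum_y X y ^+ 2.
  by rewrite mulrDl -key1 -key2; apply: sumr_ge0 => a _; apply: sqr_ge0.
rewrite (pmulr_lge0 _ pos) => h2.
by rewrite -subr_ge0 opprK.
Qed.

Lemma lt2C (R : realType) (x : R) : ((2 : R[i]) < real_complex R x) = (2 < x).
Proof. by rewrite -(rmorph_nat (real_complex R) 2) ltcR. Qed.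
Lemma le2C (R : realType) (x : R) : (real_complex R x <= (2 : R[i])) = (x <= 2).
Proof. by rewrite -(rmorph_nat (real_complex R) 2) lecR. Qed.


End Aux.

Local Open Scope ring_scope.

Theorem theorem9 (R : realType) (V : finType) (e : rel V) (v : V) :
  simple_graph e ->
  ~ cyclotomic R e ->
  ~ bipartite e ->
  cyclotomic R (delete_vertex e v) ->
  is_line_graph e ->
  salem_graph R e.
Proof.
move=> se ncyc nbip cyc' lg; split => //.
have low := line_lower (R := R) lg.
split; last by move=> mu; apply: low.
have [P [d [PP PP' dec dr hc]]] := spec (adjmx_tr R se.1).
have uniq : forall i j, 2 < d 0 i -> 2 < d 0 j -> i = j.
  move=> i j di dj; case: (eqVneq i j) => // nij.
  have [f [fv flt]] := quad_lower PP dec (enum_rank v) nij di dj.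
  have [e1 e2] := restrict_del e fv.
  have sym' : symmetric (delete_vertex e v).
    by move=> x y; rewrite /delete_vertex se.1.
  have [P1 [d1 [PP1 PP1' dec1 dr1 hc1]]] := spec (adjmx_tr R sym').
  have bd : forall k, d1 0 k <= 2.
    move=> k; have [r -> er] := root_d dr1 hc1 k.
    by rewrite le2C; have /andP [] := cyc' r er.
  have := quad_upper PP1 PP1' dec1 bd (\row_k f 0 (enum_rank (val (enum_val k)))).
  rewrite e1 e2 => H.
  by have := le_lt_trans H flt; rewrite ltxx.
case: (boolP [exists k, 2 < d 0 k]) => [/existsP [k dk]|nex]; last first.
  exfalso; apply: ncyc => x ex; rewrite low //=.
  have [k dk] := eig_d hc ex; rewrite leNgt; apply/negP => x2.
  by move/existsP: nex; apply; exists k; rewrite dk lt2C.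
have [lam dl el] := root_d dr hc k.
exists lam; split; first by rewrite -lt2C -dl.
split => //; split.
  rewrite (mult_d hc) (bigD1 k) //= dl eqxx big1 // => k' nk.
  case: eqP => // dk'; exfalso; move/negP: nk; apply; apply/eqP.
  by apply: uniq => //; rewrite dk' -dl.
move=> mu mu2 emu; have [k' dk'] := eig_d hc emu.
have kk : k' = k by apply: uniq => //; rewrite dk' lt2C.
by apply: complexI; rewrite -dk' -dl kk.
Qed.
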